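(* Let $T=T_5$ be the symplectic quandle on $(\mathbb{Z}_5)^2$ defined below. For every $45$-tuple $f_1=(x_1,\dots,x_{45})\in T^{45}$ satisfying the relations $R_1,\dots,R_{45}$, there exists an $85$-tuple $f_2=(y_1,\dots,y_{85})\in T^{85}$ satisfying the relations $S_1,\dots,S_{85}$ such that $\{y_1,\dots,y_{85}\}=\{x_1,\dots,x_{45}\}$ as subsets of $T$ (i.e. $f_1$ and $f_2$ have the same image).
   Context: $T_5$ denotes the set $(\mathbb{Z}_5)^2$ of row vectors with the binary operation $x\triangleright y = x + \langle x,y\rangle\, y$, where $\langle x,y\rangle = xAy^{T}=x_{(1)}y_{(2)}-x_{(2)}y_{(1)}\in\mathbb{Z}_5$ with $A=\begin{pmatrix}0&1\\-1&0\end{pmatrix}$ (the symplectic quandle). A relation ''$x_a = x_b\triangleright x_c$'' means the vector equation $x_a = x_b + \langle x_b,x_c\rangle x_c$. The relations $R_1,\dots,R_{45}$ (crossing relations of the fundamental quandle of the first Allen–Swenberg link $L_1$, in variables $x_1,\dots,x_{45}$) are: $R_1: x_2=x_1\triangleright x_{26}$; $R_2: x_{26}=x_{27}\triangleright x_1$; $R_3: x_1=x_2\triangleright x_3$; $R_4: x_3=x_4\triangleright x_1$; $R_5: x_4=x_5\triangleright x_3$; $R_6: x_5=x_6\triangleright x_7$; $R_7: x_8=x_7\triangleright x_6$; $R_8: x_{29}=x_{28}\triangleright x_6$; $R_9: x_3=x_6\triangleright x_{28}$; $R_{10}: x_9=x_8\triangleright x_7$; $R_{11}: x_7=x_{10}\triangleright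 x_9$; $R_{12}: x_{11}=x_9\triangleright x_{10}$; $R_{13}: x_{10}=x_{11}\triangleright x_{12}$; $R_{14}: x_{13}=x_2\triangleright x_4$; $R_{15}: x_{12}=x_{14}\triangleright x_{13}$; $R_{16}: x_{19}=x_{15}\triangleright x_{14}$; $R_{17}: x_{22}=x_{15}\triangleright x_{13}$; $R_{18}: x_{20}=x_{16}\triangleright x_{14}$; $R_{19}: x_{21}=x_{16}\triangleright x_{13}$; $R_{20}: x_{14}=x_{17}\triangleright x_{21}$; $R_{21}: x_{13}=x_{18}\triangleright x_{21}$; $R_{22}: x_{20}=x_{17}\triangleright x_{22}$; $R_{23}: x_{19}=x_{18}\triangleright x_{22}$; $R_{24}: x_{21}=x_{23}\triangleright x_{20}$; $R_{25}: x_{22}=x_{24}\triangleright x_{20}$; $R_{26}: x_{26}=x_{23}\triangleright x_{19}$; $R_{27}: x_{25}=x_{24}\triangleright x_{19}$; $R_{28}: x_{30}=x_{28}\triangleright x_{29}$; $R_{29}: x_{29}=x_{31}\triangleright x_{30}$; $R_{30}: x_{32}=x_{30}\triangleright x_{31}$; $R_{31}: x_{31}=x_{33}\triangleright x_{32}$; $R_{32}: x_{34}=x_{32}\triangleright x_{33}$; $R_{33}: x_{33}=x_{35}\triangleright x_{34}$; $R_{34}: x_{40}=x_{36}\triangleright x_{35}$; $R_{35}: x_{38}=x_{36}\triangleright x_{34}$; $R_{36}: x_{41}=x_{37}\triangleright x_{35}$; $R_{37}: x_{39}=x_{37}\triangleright x_{34}$; $R_{38}: x_{35}=x_{42}\triangleright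 x_{39}$; $R_{39}: x_{34}=x_{43}\triangleright x_{39}$; $R_{40}: x_{41}=x_{42}\triangleright x_{38}$; $R_{41}: x_{40}=x_{43}\triangleright x_{38}$; $R_{42}: x_{25}=x_{44}\triangleright x_{40}$; $R_{43}: x_{39}=x_{44}\triangleright x_{41}$; $R_{44}: x_{27}=x_{45}\triangleright x_{40}$; $R_{45}: x_{38}=x_{45}\triangleright x_{41}$. The relations $S_1,\dots,S_{85}$ (crossing relations of the fundamental quandle of the second Allen–Swenberg link $L_2$, in variables $y_1,\dots,y_{85}$) are: for $k\in\{1,\dots,45\}\setminus\{9,44\}$, $S_k$ is $R_k$ with every $x_i$ replaced by $y_i$; $S_9: y_{47}=y_6\triangleright y_{28}$; $S_{44}: y_{46}=y_{45}\triangleright y_{40}$; and $S_{46}: y_{47}=y_{67}\triangleright y_{48}$; $S_{47}: y_{49}=y_{48}\triangleright y_{67}$; $S_{48}: y_{69}=y_{68}\triangleright y_{67}$; $S_{49}: y_3=y_{67}\triangleright y_{68}$; $S_{50}: y_{50}=y_{49}\triangleright y_{48}$; $S_{51}: y_{48}=y_{51}\triangleright y_{50}$; $S_{52}: y_{52}=y_{50}\triangleright y_{51}$; $S_{53}: y_{51}=y_{53}\triangleright y_{52}$; $S_{54}: y_{54}=y_{52}\triangleright y_{53}$; $S_{55}: y_{53}=y_{55}\triangleright y_{54}$; $S_{56}: y_{58}=y_{56}\triangleright y_{55}$; $S_{57}: y_{61}=y_{56}\triangleright y_{54}$; $S_{58}: y_{59}=y_{57}\triangleright y_{55}$; $S_{59}: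 y_{60}=y_{57}\triangleright y_{54}$; $S_{60}: y_{55}=y_{62}\triangleright y_{60}$; $S_{61}: y_{54}=y_{63}\triangleright y_{60}$; $S_{62}: y_{59}=y_{62}\triangleright y_{61}$; $S_{63}: y_{58}=y_{63}\triangleright y_{61}$; $S_{64}: y_{46}=y_{64}\triangleright y_{58}$; $S_{65}: y_{60}=y_{64}\triangleright y_{59}$; $S_{66}: y_{66}=y_{65}\triangleright y_{58}$; $S_{67}: y_{61}=y_{65}\triangleright y_{59}$; $S_{68}: y_{70}=y_{68}\triangleright y_{69}$; $S_{69}: y_{69}=y_{71}\triangleright y_{70}$; $S_{70}: y_{72}=y_{70}\triangleright y_{71}$; $S_{71}: y_{71}=y_{73}\triangleright y_{72}$; $S_{72}: y_{74}=y_{72}\triangleright y_{73}$; $S_{73}: y_{73}=y_{75}\triangleright y_{74}$; $S_{74}: y_{78}=y_{76}\triangleright y_{75}$; $S_{75}: y_{81}=y_{76}\triangleright y_{74}$; $S_{76}: y_{79}=y_{77}\triangleright y_{75}$; $S_{77}: y_{80}=y_{77}\triangleright y_{74}$; $S_{78}: y_{75}=y_{82}\triangleright y_{80}$; $S_{79}: y_{74}=y_{83}\triangleright y_{80}$; $S_{80}: y_{79}=y_{82}\triangleright y_{81}$; $S_{81}: y_{78}=y_{83}\triangleright y_{81}$; $S_{82}: y_{66}=y_{84}\triangleright y_{78}$; $S_{83}: y_{80}=y_{84}\triangleright y_{79}$; $S_{84}: y_{27}=y_{85}\triangleright y_{78}$; $S_{85}: y_{81}=y_{85}\triangleright y_{79}$.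 *)

(* Defs.v *)
From HB Require Import structures.
From mathcomp Require Import all_boot all_order all_algebra.
Set Implicit Arguments. Unset Strict Implicit. Unset Printing Implicit Defensive.
Import GRing.Theory.
Local Open Scope ring_scope.

Definition T := 'rV['F_5]_2.

Definition Asymp : 'M['F_5]_2 :=
  \matrix_(i < 2, j < 2)
    (if (val i == 0%N) && (val j == 1%N) then 1
     else if (val i == 1%N) && (val j == 0%N) then -1 else 0).

Definition sform (x y : T) : 'F_5 := (x *m Asymp *m y^T) 0 0.

Definition qop (x y : T) : T := x + sform x y *: y.

(* 1-based access to a tuple: at s i = x_i *)
Definition at_ n (s : n.-tuple T) (i : nat) : T := nth 0 s i.-1.

Definition sat_rels n (rels : seq (nat * nat * nat)) (s : n.-tuple T) : Prop :=
  forall a b c, (a, b, c) \in rels -> at_ s a = qop (at_ s b) (at_ s c).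

Definition Rrels : seq (nat * nat * nat) :=
  [:: (2,1,26); (26,27,1); (1,2,3); (3,4,1); (4,5,3); (5,6,7); (8,7,6);
      (29,28,6); (3,6,28); (9,8,7); (7,10,9); (11,9,10); (10,11,12);
      (13,2,4); (12,14,13); (19,15,14); (22,15,13); (20,16,14); (21,16,13);
      (14,17,21); (13,18,21); (20,17,22); (19,18,22); (21,23,20);
      (22,24,20); (26,23,19); (25,24,19); (30,28,29); (29,31,30);
      (32,30,31); (31,33,32); (34,32,33); (33,35,34); (40,36,35);
      (38,36,34); (41,37,35); (39,37,34); (35,42,39); (34,43,39);
      (41,42,38); (40,43,38); (25,44,40); (39,44,41); (27,45,40);
      (38,45,41)]%N.

Definition Srels : seq (nat * nat * nat) :=
  [:: (2,1,26); (26,27,1); (1,2,3); (3,4,1); (4,5,3); (5,6,7); (8,7,6);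
      (29,28,6); (47,6,28); (9,8,7); (7,10,9); (11,9,10); (10,11,12);
      (13,2,4); (12,14,13); (19,15,14); (22,15,13); (20,16,14); (21,16,13);
      (14,17,21); (13,18,21); (20,17,22); (19,18,22); (21,23,20);
      (22,24,20); (26,23,19); (25,24,19); (30,28,29); (29,31,30);
      (32,30,31); (31,33,32); (34,32,33); (33,35,34); (40,36,35);
      (38,36,34); (41,37,35); (39,37,34); (35,42,39); (34,43,39);
      (41,42,38); (40,43,38); (25,44,40); (39,44,41); (46,45,40);
      (38,45,41);
      (47,67,48); (49,48,67); (69,68,67); (3,67,68); (50,49,48);
      (48,51,50); (52,50,51); (51,53,52); (54,52,53); (53,55,54);
      (58,56,55); (61,56,54); (59,57,55); (60,57,54); (55,62,60);
      (54,63,60); (59,62,61); (58,63,61); (46,64,58); (60,64,59);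
      (66,65,58); (61,65,59); (70,68,69); (69,71,70); (72,70,71);
      (71,73,72); (74,72,73); (73,75,74); (78,76,75); (81,76,74);
      (79,77,75); (80,77,74); (75,82,80); (74,83,80); (79,82,81);
      (78,83,81); (66,84,78); (80,84,79); (27,85,78); (81,85,79)]%N.

(* Main.v *)
Require Import Defs.
From mathcomp Require Import all_boot all_order all_algebra ring zify.
Set Warnings "-notation-overridden".
Set Implicit Arguments. Unset Strict Implicit. Unset Printing Implicit Defensive.

Definition optab : seq (seq nat) := [:: [:: 0; 0; 0; 0; 0; 0; 0; 0; 0; 0; 0; 0; 0; 0; 0; 0; 0; 0; 0; 0; 0; 0; 0; 0; 0];
 [:: 1; 1; 1; 1; 1; 21; 20; 24; 23; 22; 6; 9; 7; 5; 8; 6; 8; 5; 7; 9; 21; 22; 23; 24; 20];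
 [:: 2; 2; 2; 2; 2; 17; 15; 18; 16; 19; 12; 13; 14; 10; 11; 12; 11; 10; 14; 13; 17; 19; 16; 18; 15];
 [:: 3; 3; 3; 3; 3; 13; 10; 12; 14; 11; 18; 17; 16; 15; 19; 18; 19; 15; 16; 17; 13; 11; 14; 12; 10];
 [:: 4; 4; 4; 4; 4; 9; 5; 6; 7; 8; 24; 21; 23; 20; 22; 24; 22; 20; 23; 21; 9; 8; 7; 6; 5];
 [:: 5; 6; 9; 9; 6; 5; 11; 19; 24; 1; 5; 16; 4; 14; 21; 5; 21; 14; 4; 16; 5; 1; 24; 19; 11];
 [:: 6; 7; 5; 5; 7; 1; 6; 13; 17; 23; 11; 20; 6; 19; 4; 11; 4; 19; 6; 20; 1; 23; 17; 13; 6];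
 [:: 7; 8; 6; 6; 8; 22; 1; 7; 10; 15; 17; 4; 13; 24; 7; 17; 7; 24; 13; 4; 22; 15; 10; 7; 1];
 [:: 8; 9; 7; 7; 9; 18; 21; 1; 8; 12; 23; 8; 15; 4; 10; 23; 10; 4; 15; 8; 18; 12; 8; 1; 21];
 [:: 9; 5; 8; 8; 5; 14; 16; 20; 1; 9; 4; 12; 22; 9; 18; 4; 18; 9; 22; 12; 14; 9; 1; 20; 16];
 [:: 10; 12; 13; 13; 12; 10; 22; 8; 18; 2; 10; 7; 3; 23; 17; 10; 17; 23; 3; 7; 10; 2; 18; 8; 22];
 [:: 11; 13; 14; 14; 13; 6; 17; 2; 11; 24; 16; 11; 5; 3; 20; 16; 20; 3; 5; 11; 6; 24; 11; 2; 17];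
 [:: 12; 14; 10; 10; 14; 2; 12; 21; 9; 16; 22; 15; 12; 8; 3; 22; 3; 8; 12; 15; 2; 16; 9; 21; 12];
 [:: 13; 10; 11; 11; 10; 23; 7; 15; 2; 13; 3; 24; 19; 13; 6; 3; 6; 13; 19; 24; 23; 13; 2; 15; 7];
 [:: 14; 11; 12; 12; 11; 19; 2; 14; 20; 5; 9; 3; 21; 18; 14; 9; 14; 18; 21; 3; 19; 5; 20; 14; 2];
 [:: 15; 18; 17; 17; 18; 15; 8; 22; 12; 3; 15; 23; 2; 7; 13; 15; 13; 7; 2; 23; 15; 3; 12; 22; 8];
 [:: 16; 19; 18; 18; 19; 11; 3; 16; 5; 20; 21; 2; 9; 12; 16; 21; 16; 12; 9; 2; 11; 20; 5; 16; 3];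
 [:: 17; 15; 19; 19; 15; 7; 23; 10; 3; 17; 2; 6; 11; 17; 24; 2; 24; 17; 11; 6; 7; 17; 3; 10; 23];
 [:: 18; 16; 15; 15; 16; 3; 18; 9; 21; 14; 8; 10; 18; 22; 2; 8; 2; 22; 18; 10; 3; 14; 21; 9; 18];
 [:: 19; 17; 16; 16; 17; 24; 13; 3; 19; 6; 14; 19; 20; 2; 5; 14; 5; 2; 20; 19; 24; 6; 19; 3; 13];
 [:: 20; 24; 21; 21; 24; 20; 19; 11; 6; 4; 20; 14; 1; 16; 9; 20; 9; 16; 1; 14; 20; 4; 6; 11; 19];
 [:: 21; 20; 22; 22; 20; 16; 14; 5; 4; 21; 1; 18; 8; 21; 12; 1; 12; 21; 8; 18; 16; 21; 4; 5; 14];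
 [:: 22; 21; 23; 23; 21; 12; 9; 4; 22; 18; 7; 22; 10; 1; 15; 7; 15; 1; 10; 22; 12; 18; 22; 4; 9];
 [:: 23; 22; 24; 24; 22; 8; 4; 23; 15; 10; 13; 1; 17; 6; 23; 13; 23; 6; 17; 1; 8; 10; 15; 23; 4];
 [:: 24; 23; 20; 20; 23; 4; 24; 17; 13; 7; 19; 5; 24; 11; 1; 19; 1; 11; 24; 5; 4; 7; 13; 17; 24]].
Definition ioptab : seq (seq nat) := [:: [:: 0; 0; 0; 0; 0; 0; 0; 0; 0; 0; 0; 0; 0; 0; 0; 0; 0; 0; 0; 0; 0; 0; 0; 0; 0];
 [:: 1; 1; 1; 1; 1; 6; 7; 8; 9; 5; 21; 23; 20; 22; 24; 21; 24; 22; 20; 23; 6; 5; 9; 8; 7];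
 [:: 2; 2; 2; 2; 2; 12; 14; 11; 13; 10; 17; 16; 15; 19; 18; 17; 18; 19; 15; 16; 12; 10; 13; 11; 14];
 [:: 3; 3; 3; 3; 3; 18; 16; 19; 17; 15; 13; 14; 10; 11; 12; 13; 12; 11; 10; 14; 18; 15; 17; 19; 16];
 [:: 4; 4; 4; 4; 4; 24; 23; 22; 21; 20; 9; 7; 5; 8; 6; 9; 6; 8; 5; 7; 24; 20; 21; 22; 23];
 [:: 5; 9; 6; 6; 9; 5; 4; 21; 16; 14; 5; 24; 11; 1; 19; 5; 19; 1; 11; 24; 5; 14; 16; 21; 4];
 [:: 6; 5; 7; 7; 5; 11; 6; 4; 20; 19; 1; 17; 6; 23; 13; 1; 13; 23; 6; 17; 11; 19; 20; 4; 6];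
 [:: 7; 6; 8; 8; 6; 17; 13; 7; 4; 24; 22; 10; 1; 15; 7; 22; 7; 15; 1; 10; 17; 24; 4; 7; 13];
 [:: 8; 7; 9; 9; 7; 23; 15; 10; 8; 4; 18; 8; 21; 12; 1; 18; 1; 12; 21; 8; 23; 4; 8; 10; 15];
 [:: 9; 8; 5; 5; 8; 4; 22; 18; 12; 9; 14; 1; 16; 9; 20; 14; 20; 9; 16; 1; 4; 9; 12; 18; 22];
 [:: 10; 13; 12; 12; 13; 10; 3; 17; 7; 23; 10; 18; 22; 2; 8; 10; 8; 2; 22; 18; 10; 23; 7; 17; 3];
 [:: 11; 14; 13; 13; 14; 16; 5; 20; 11; 3; 6; 11; 17; 24; 2; 6; 2; 24; 17; 11; 16; 3; 11; 20; 5];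
 [:: 12; 10; 14; 14; 10; 22; 12; 3; 15; 8; 2; 9; 12; 16; 21; 2; 21; 16; 12; 9; 22; 8; 15; 3; 12];
 [:: 13; 11; 10; 10; 11; 3; 19; 6; 24; 13; 23; 2; 7; 13; 15; 23; 15; 13; 7; 2; 3; 13; 24; 6; 19];
 [:: 14; 12; 11; 11; 12; 9; 21; 14; 3; 18; 19; 20; 2; 5; 14; 19; 14; 5; 2; 20; 9; 18; 3; 14; 21];
 [:: 15; 17; 18; 18; 17; 15; 2; 13; 23; 7; 15; 12; 8; 3; 22; 15; 22; 3; 8; 12; 15; 7; 23; 13; 2];
 [:: 16; 18; 19; 19; 18; 21; 9; 16; 2; 12; 11; 5; 3; 20; 16; 11; 16; 20; 3; 5; 21; 12; 2; 16; 9];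
 [:: 17; 19; 15; 15; 19; 2; 11; 24; 6; 17; 7; 3; 23; 17; 10; 7; 10; 17; 23; 3; 2; 17; 6; 24; 11];
 [:: 18; 15; 16; 16; 15; 8; 18; 2; 10; 22; 3; 21; 18; 14; 9; 3; 9; 14; 18; 21; 8; 22; 10; 2; 18];
 [:: 19; 16; 17; 17; 16; 14; 20; 5; 19; 2; 24; 19; 13; 6; 3; 24; 3; 6; 13; 19; 14; 2; 19; 5; 20];
 [:: 20; 21; 24; 24; 21; 20; 1; 9; 14; 16; 20; 6; 19; 4; 11; 20; 11; 4; 19; 6; 20; 16; 14; 9; 1];
 [:: 21; 22; 20; 20; 22; 1; 8; 12; 18; 21; 16; 4; 14; 21; 5; 16; 5; 21; 14; 4; 1; 21; 18; 12; 8];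
 [:: 22; 23; 21; 21; 23; 7; 10; 15; 22; 1; 12; 22; 9; 18; 4; 12; 4; 18; 9; 22; 7; 1; 22; 15; 10];
 [:: 23; 24; 22; 22; 24; 13; 17; 23; 1; 6; 8; 15; 4; 10; 23; 8; 23; 10; 4; 15; 13; 6; 1; 23; 17];
 [:: 24; 20; 23; 23; 20; 19; 24; 1; 5; 11; 4; 13; 24; 7; 17; 4; 17; 7; 24; 13; 19; 11; 5; 1; 24]].
Definition opn (x y : nat) : nat := nth 0 (nth [::] optab x) y.
Definition iopn (x y : nat) : nat := nth 0 (nth [::] ioptab x) y.

Lemma opn_inv : forall x y, x < 25 -> y < 25 -> iopn (opn x y) y = x.
Proof.
suff H : all (fun x => all (fun y => iopn (opn x y) y == x) (iota 0 25)) (iota 0 25).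
  move=> x y Hx Hy; apply/eqP.
  have /allP/(_ x) := H; rewrite mem_iota add0n Hx => /(_ isT) /allP /(_ y).
  by rewrite mem_iota add0n Hy => /(_ isT).
by vm_compute.
Qed.

Inductive cstr := Rel of nat & nat & nat | Gen of seq nat & (seq nat -> bool) | Tab of seq nat & seq (seq (seq nat)).
Definition scope c := match c with Rel a b c => [:: a; b; c] | Gen s _ => s | Tab s _ => s end.
Definition holds (f : nat -> nat) c :=
  match c with Rel a b c => f a == opn (f b) (f c) | Gen s P => P (map f s) | Tab s t => let m := map f s in m \in nth [::] t (head 0 m) end.

Definition asg := seq (option nat).
Definition assigned (r : asg) i := isSome (nth None r i).
Definition getv (r : asg) i := odflt 0 (nth None r i).

Definition unknowns r c := undup (filter (fun i => ~~ assigned r i) (scope c)).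

Definition cands (r : asg) c v : seq nat :=
  match c with
  | Rel a b c =>
    let sub t i := if i == v then t else getv r i in
    if (v == a) && (v != b) && (v != c) then [:: opn (getv r b) (getv r c)]
    else if (v == b) && (v != a) && (v != c) then [:: iopn (getv r a) (getv r c)]
    else filter (fun t => sub t a == opn (sub t b) (sub t c)) (iota 0 25)
  | Gen s P => filter (fun t => P (map (fun i => if i == v then t else getv r i) s)) (iota 0 25)
  | Tab s tb =>
    let k := index v s in
    let pat := map (nth None r) s in
    let bucket := if head 0 s == v then flatten tb else nth [::] tb (getv r (head 0 s)) in
    map (fun tu => nth 0 tu k)
      (filter (fun tu => (size tu == size s) &&
         all2 (fun o x => if o is Some y then x == y else x == nth 0 tu k) pat tu) bucket)
  end.

(* None = conflict ; Some None = nothing ; Some (Some (v, cs)) *)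
Definition examine r c : option (option (nat * seq nat)) :=
  match unknowns r c with
  | [::] => if holds (getv r) c then Some None else None
  | [:: v] => let cs := cands r c v in if cs is [::] then None else Some (Some (v, cs))
  | _ => Some None
  end.

Fixpoint pass (cs : seq cstr) (r : asg) (ch : bool) : option (asg * bool) :=
  match cs with
  | [::] => Some (r, ch)
  | c :: cs' =>
    match examine r c with
    | None => None
    | Some (Some (v, [:: t])) => pass cs' (set_nth None r v (Some t)) true
    | Some _ => pass cs' r ch
    end
  end.

Fixpoint propagate (cs : seq cstr) (n : nat) (r : asg) : option asg :=
  match n with
  | 0 => Some r
  | n'.+1 => match pass cs r false with
             | None => None
             | Some (r', true) => propagate cs n' r'
             | Some (r', false) => Some r'
             end
  end.

Inductive choice := Conflict | Leaf | Branch of nat & seq nat.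

Fixpoint choose_c (cs : seq cstr) (r : asg) : option choice :=
  match cs with
  | [::] => None
  | c :: cs' => match examine r c with
                | None => Some Conflict
                | Some (Some (v, l)) => Some (Branch v l)
                | Some None => choose_c cs' r
                end
  end.

Definition choose cs (order : seq nat) r :=
  match choose_c cs r with
  | Some ch => ch
  | None => match [seq i <- order | ~~ assigned r i] with
            | [::] => Leaf
            | v :: _ => Branch v (iota 0 25)
            end
  end.

Definition leafok (goals : seq cstr) r :=
  all (fun c => all (assigned r) (scope c) && holds (getv r) c) goals.

Fixpoint search cs order goals (n : nat) (r : asg) : bool :=
  match n with
  | 0 => false
  | n'.+1 =>
    match propagate cs 50 r with
    | None => true
    | Some r' =>
      match choose cs order r' with
      | Conflict => true
      | Leaf => leafok goals r'
      | Branch v l => all (fun t => search cs order goals n' (set_nth None r' v (Some t))) l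
      end
    end
  end.

Definition agree (f : nat -> nat) (r : asg) := forall i x, nth None r i = Some x -> f i = x.

Lemma agree_set f r v t : agree f r -> f v = t -> agree f (set_nth None r v (Some t)).
Proof.
move=> Ha Hv i x; rewrite nth_set_nth /=; case: eqP => [-> [<-] //|_]; exact: Ha.
Qed.

Lemma agree_getv f r i : agree f r -> assigned r i -> getv r i = f i.
Proof. by rewrite /assigned /getv => Ha; case E: (nth None r i) => [x|] //= _; rewrite (Ha _ _ E). Qed.

Lemma map_agree f r s : agree f r -> all (assigned r) s -> map (getv r) s = map f s.
Proof. move=> Ha /allP H; apply/eq_in_map => i /H; exact: agree_getv. Qed.

Lemma holds_agree f r c : agree f r -> all (assigned r) (scope c) -> holds (getv r) c = holds f c.
Proof.
move=> Ha Hall; case: c Hall => [a b c|s P|s tb] /= Hall; last 2 first.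
- by rewrite (map_agree Ha Hall).
- by rewrite (map_agree Ha Hall).
by case/and4P: Hall => Ha' Hb' Hc' _; rewrite !(agree_getv Ha).
Qed.

Lemma unknownsP r c i : i \in scope c -> ~~ assigned r i -> i \in unknowns r c.
Proof. by move=> Hs Hn; rewrite mem_undup mem_filter Hn. Qed.

Lemma unknowns_sub r c i : i \in unknowns r c -> i \in scope c.
Proof. by rewrite mem_undup mem_filter => /andP[]. Qed.


Lemma all2_map (Q : nat -> nat -> bool) f s : all2 Q s (map f s) = all (fun i => Q i (f i)) s.
Proof. by elim: s => //= i s ->. Qed.

Lemma all2_map2 (Q : option nat -> nat -> bool) (g : nat -> option nat) (f : nat -> nat) (s : seq nat) :
  all2 Q (map g s) (map f s) = all (fun i => Q (g i) (f i)) s.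
Proof. by elim: s => //= i s ->. Qed.

Lemma cands_sound f r c v :
  (forall i, f i < 25) -> agree f r -> holds f c -> unknowns r c = [:: v] -> f v \in cands r c v.
Proof.
move=> Hb Ha Hh Hu.
have Hv : v \in scope c by apply: (@unknowns_sub r); rewrite Hu mem_head.
have Hoth : forall i, i \in scope c -> i != v -> assigned r i.
  move=> i Hi Hne; apply/negPn/negP => Hn.
  by move: (unknownsP Hi Hn); rewrite Hu inE (negbTE Hne).
case: c Hh Hu Hv Hoth => [a b c|s P|s tb] Hh Hu Hv Hoth.
- have Hg : forall i, i \in [:: a; b; c] -> i != v -> getv r i = f i.
    by move=> i Hi Hne; apply: agree_getv => //; exact: Hoth.
  have Hh' : f a = opn (f b) (f c) by apply/eqP; exact: Hh.
  rewrite /cands.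
  case: ifP => [/andP[/andP[/eqP Ea Nb] Nc]|_].
    have Gb : getv r b = f b by apply: Hg; rewrite ?inE ?eqxx ?orbT // eq_sym.
    have Gc : getv r c = f c by apply: Hg; rewrite ?inE ?eqxx ?orbT // eq_sym.
    by rewrite Gb Gc Ea Hh' inE.
  case: ifP => [/andP[/andP[/eqP Eb Na] Nc]|_].
    have Ga : getv r a = f a by apply: Hg; rewrite ?inE ?eqxx ?orbT // eq_sym.
    have Gc : getv r c = f c by apply: Hg; rewrite ?inE ?eqxx ?orbT // eq_sym.
    by rewrite Ga Gc Eb Hh' opn_inv ?Hb // inE.
  rewrite mem_filter mem_iota add0n Hb leq0n andbT.
  have E : forall i, i \in [:: a; b; c] -> (if i == v then f v else getv r i) = f i.
    by move=> i Hi; case: eqP => [->//|/eqP Hne]; exact: Hg.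
  by rewrite andbT (E a) ?(E b) ?(E c) ?inE ?eqxx ?orbT // Hh'.
- rewrite /cands mem_filter mem_iota add0n Hb leq0n andbT.
  suff -> : map (fun i => if i == v then f v else getv r i) s = map f s by rewrite andbT; exact: Hh.
  apply/eq_in_map => i Hi; case: eqP => [->//|/eqP Hne].
  by apply: agree_getv => //; exact: Hoth.
- have Hv' : v \in s by exact: Hv.
  have Hn : nth 0 (map f s) (index v s) = f v by rewrite (nth_map 0) ?index_mem // (nth_index 0 Hv').
  apply/mapP; exists (map f s); last by rewrite Hn.
  have Hh' : map f s \in nth [::] tb (head 0 (map f s)) := Hh.
  have Hhd : head 0 (map f s) = f (head 0 s) by case: (s) Hv' => //.
  rewrite Hhd in Hh'.
  rewrite mem_filter size_map eqxx Hn all2_map2 andTb; apply/andP; split.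
    apply/allP => i Hi.
    case E: (nth None r i) => [y|].
    + by rewrite (Ha _ _ E).
    + case: (eqVneq i v) => [->//|Hne].
      by move: (Hoth i Hi Hne); rewrite /assigned E.
  case: ifP => [_|Hne].
    apply/flattenP; exists (nth [::] tb (f (head 0 s))) => //.
    case: (ltnP (f (head 0 s)) (size tb)) => [Hlt|Hge]; first exact: mem_nth.
    by move: Hh'; rewrite nth_default.
  have Hs0 : head 0 s \in s by move: Hv'; case: (s) => //= x s0 _; rewrite mem_head.
  rewrite (agree_getv Ha) //; apply: Hoth => //; by rewrite Hne.
Qed.

Lemma examine_sound f r c :
  (forall i, f i < 25) -> agree f r -> holds f c ->
  match examine r c return Prop with
  | None => False
  | Some None => True
  | Some (Some (v, l)) => f v \in l
  end.
Proof.
move=> Hb Ha Hh; rewrite /examine.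
case Hu: (unknowns r c) => [|v [|w l]] //.
- have Hall : all (assigned r) (scope c).
    apply/allP => i Hi; apply/negPn/negP => Hn.
    by move: (unknownsP Hi Hn); rewrite Hu.
  suff -> : holds (getv r) c by [].
  by rewrite (holds_agree Ha Hall).
- have := cands_sound Hb Ha Hh Hu.
  by case: (cands r c v).
Qed.

Lemma pass_sound f cs r ch :
  (forall i, f i < 25) -> agree f r -> all (holds f) cs ->
  match pass cs r ch return Prop with None => False | Some (r', _) => agree f r' end.
Proof.
move=> Hb; elim: cs r ch => [|c cs IH] r ch Ha //= /andP[Hc Hcs].
have := examine_sound Hb Ha Hc.
case: (examine r c) => [[[v [|t [|t' l]]]|]|] //= H; try exact: IH.
apply: IH => //; apply: agree_set => //; by move: H; rewrite inE => /eqP.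
Qed.

Lemma propagate_sound f cs n r :
  (forall i, f i < 25) -> agree f r -> all (holds f) cs ->
  match propagate cs n r return Prop with None => False | Some r' => agree f r' end.
Proof.
move=> Hb; elim: n r => [|n IH] r Ha Hcs //=.
have := pass_sound false Hb Ha Hcs.
case: (pass cs r false) => [[r' [|]]|] //= H; exact: IH.
Qed.

Lemma choose_c_sound f cs r :
  (forall i, f i < 25) -> agree f r -> all (holds f) cs ->
  match choose_c cs r return Prop with
  | Some Conflict => False
  | Some (Branch v l) => f v \in l
  | _ => True end.
Proof.
move=> Hb Ha; elim: cs => [|c cs IH] //= /andP[Hc Hcs].
have := examine_sound Hb Ha Hc.
case: (examine r c) => [[[v l]|]|] //= _; exact: IH.
Qed.

Lemma all_impl (A : Type) (a b : A -> bool) s : (forall x, a x -> b x) -> all a s -> all b s.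
Proof. by move=> H; elim: s => //= x s IH /andP[/H -> /IH]. Qed.

Lemma leaf_sound f r goals : agree f r -> leafok goals r -> all (holds f) goals.
Proof.
move=> Ha; apply: all_impl => c /andP[Hall Hh].
by rewrite -(holds_agree Ha Hall).
Qed.

Lemma searchS cs order goals n r : search cs order goals n.+1 r =
    match propagate cs 50 r with
    | None => true
    | Some r' =>
      match choose cs order r' with
      | Conflict => true
      | Leaf => leafok goals r'
      | Branch v l => all (fun t => search cs order goals n (set_nth None r' v (Some t))) l
      end
    end.
Proof. by []. Qed.

Lemma search_sound f cs order goals n r :
  (forall i, f i < 25) -> all (holds f) cs ->
  search cs order goals n r -> agree f r -> all (holds f) goals.
Proof.
move=> Hb Hcs; elim: n r => [|n IH] r //.
rewrite searchS => Hs Ha.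
have := propagate_sound 50 Hb Ha Hcs.
case: (propagate cs 50 r) Hs => [r'|] // Hs Ha'.
move: Hs; rewrite /choose.
have := choose_c_sound Hb Ha' Hcs.
case: (choose_c cs r') => [[| |v l]|] //.
- move=> _; exact: leaf_sound.
- move=> Hv HL; apply: (IH _ (allP HL _ Hv)); exact: agree_set.
- move=> _.
  case: [seq i <- order | ~~ assigned r' i] => [|v l].
  + exact: leaf_sound.
  + move=> HL; apply: (IH _ (allP HL (f v) _)); first by rewrite mem_iota add0n Hb.
    exact: agree_set.
Qed.


Definition TA : seq (seq (seq nat)) := [:: [:: [:: 0; 0; 0; 0]; [:: 0; 1; 0; 1]; [:: 0; 1; 0; 4]; [:: 0; 2; 0; 2]; [:: 0; 2; 0; 3]; [:: 0; 3; 0; 2]; [:: 0; 3; 0; 3]; [:: 0; 4; 0; 1]; [:: 0; 4; 0; 4]; [:: 0; 5; 0; 5]; [:: 0; 5; 0; 20]; [:: 0; 6; 0; 6]; [:: 0; 6; 0; 24]; [:: 0; 7; 0; 7]; [:: 0; 7; 0; 23]; [:: 0; 8; 0; 8]; [:: 0; 8; 0; 22]; [:: 0; 9; 0; 9]; [:: 0; 9; 0; 21]; [:: 0; 10; 0; 10]; [:: 0; 10; 0; 15]; [:: 0; 11; 0; 11]; [:: 0; 11; 0; 19]; [:: 0; 12; 0; 12]; [:: 0; 12; 0; 18]; [:: 0; 13; 0; 13]; [:: 0; 13; 0; 17]; [:: 0; 14; 0; 14]; [:: 0; 14; 0; 16]; [:: 0; 15; 0; 10]; [:: 0; 15; 0;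 15]; [:: 0; 16; 0; 14]; [:: 0; 16; 0; 16]; [:: 0; 17; 0; 13]; [:: 0; 17; 0; 17]; [:: 0; 18; 0; 12]; [:: 0; 18; 0; 18]; [:: 0; 19; 0; 11]; [:: 0; 19; 0; 19]; [:: 0; 20; 0; 5]; [:: 0; 20; 0; 20]; [:: 0; 21; 0; 9]; [:: 0; 21; 0; 21]; [:: 0; 22; 0; 8]; [:: 0; 22; 0; 22]; [:: 0; 23; 0; 7]; [:: 0; 23; 0; 23]; [:: 0; 24; 0; 6]; [:: 0; 24; 0; 24]];
 [:: [:: 1; 0; 1; 0]; [:: 1; 0; 4; 0]; [:: 1; 1; 1; 1]; [:: 1; 2; 1; 2]; [:: 1; 2; 4; 3]; [:: 1; 3; 1; 3]; [:: 1; 3; 4; 2]; [:: 1; 4; 1; 4]; [:: 1; 5; 15; 13]; [:: 1; 5; 18; 3]; [:: 1; 6; 16; 3]; [:: 1; 6; 18; 10]; [:: 1; 7; 16; 12]; [:: 1; 7; 19; 3]; [:: 1; 8; 17; 3]; [:: 1; 8; 19; 14]; [:: 1; 9; 15; 3]; [:: 1; 9; 17; 11]; [:: 1; 10; 1; 10]; [:: 1; 10; 4; 15]; [:: 1; 11; 1; 11]; [:: 1; 11; 4; 19]; [:: 1; 12; 1; 12]; [:: 1; 12; 4; 18]; [:: 1; 13; 1; 13]; [:: 1; 13; 4; 17]; [:: 1; 14; 1; 14]; [:: 1; 14; 4; 16]; [:: 1; 15; 1; 15]; [:: 1; 15; 4; 10]; [:: 1; 16; 1; 16]; [:: 1; 16;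 4; 14]; [:: 1; 17; 1; 17]; [:: 1; 17; 4; 13]; [:: 1; 18; 1; 18]; [:: 1; 18; 4; 12]; [:: 1; 19; 1; 19]; [:: 1; 19; 4; 11]; [:: 1; 20; 15; 17]; [:: 1; 20; 18; 2]; [:: 1; 21; 15; 2]; [:: 1; 21; 17; 19]; [:: 1; 22; 17; 2]; [:: 1; 22; 19; 16]; [:: 1; 23; 16; 18]; [:: 1; 23; 19; 2]; [:: 1; 24; 16; 2]; [:: 1; 24; 18; 15]];
 [:: [:: 2; 0; 2; 0]; [:: 2; 0; 3; 0]; [:: 2; 1; 2; 1]; [:: 2; 1; 3; 4]; [:: 2; 2; 2; 2]; [:: 2; 3; 2; 3]; [:: 2; 4; 2; 4]; [:: 2; 4; 3; 1]; [:: 2; 5; 2; 5]; [:: 2; 5; 3; 20]; [:: 2; 6; 2; 6]; [:: 2; 6; 3; 24]; [:: 2; 7; 2; 7]; [:: 2; 7; 3; 23]; [:: 2; 8; 2; 8]; [:: 2; 8; 3; 22]; [:: 2; 9; 2; 9]; [:: 2; 9; 3; 21]; [:: 2; 10; 20; 24]; [:: 2; 10; 21; 4]; [:: 2; 11; 22; 21]; [:: 2; 11; 23; 4]; [:: 2; 12; 20; 4]; [:: 2; 12; 24; 23]; [:: 2; 13; 21; 20]; [:: 2; 13; 22; 4]; [:: 2; 14; 23; 22]; [:: 2; 14; 24; 4]; [:: 2; 15; 20; 6]; [:: 2; 15; 21; 1]; [:: 2; 16; 23; 8]; [:: 2; 16; 24; 1]; [:: 2; 17; 21; 5]; [:: 2;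 17; 22; 1]; [:: 2; 18; 20; 1]; [:: 2; 18; 24; 7]; [:: 2; 19; 22; 9]; [:: 2; 19; 23; 1]; [:: 2; 20; 2; 20]; [:: 2; 20; 3; 5]; [:: 2; 21; 2; 21]; [:: 2; 21; 3; 9]; [:: 2; 22; 2; 22]; [:: 2; 22; 3; 8]; [:: 2; 23; 2; 23]; [:: 2; 23; 3; 7]; [:: 2; 24; 2; 24]; [:: 2; 24; 3; 6]];
 [:: [:: 3; 0; 2; 0]; [:: 3; 0; 3; 0]; [:: 3; 1; 2; 4]; [:: 3; 1; 3; 1]; [:: 3; 2; 3; 2]; [:: 3; 3; 3; 3]; [:: 3; 4; 2; 1]; [:: 3; 4; 3; 4]; [:: 3; 5; 2; 20]; [:: 3; 5; 3; 5]; [:: 3; 6; 2; 24]; [:: 3; 6; 3; 6]; [:: 3; 7; 2; 23]; [:: 3; 7; 3; 7]; [:: 3; 8; 2; 22]; [:: 3; 8; 3; 8]; [:: 3; 9; 2; 21]; [:: 3; 9; 3; 9]; [:: 3; 10; 5; 24]; [:: 3; 10; 9; 4]; [:: 3; 11; 7; 4]; [:: 3; 11; 8; 21]; [:: 3; 12; 5; 4]; [:: 3; 12; 6; 23]; [:: 3; 13; 8; 4]; [:: 3; 13; 9; 20]; [:: 3; 14; 6; 4]; [:: 3; 14; 7; 22]; [:: 3; 15; 5; 6]; [:: 3; 15; 9; 1]; [:: 3; 16; 6; 1]; [:: 3; 16; 7; 8]; [:: 3; 17; 8; 1]; [:: 3; 17; 9; 5]; [:: 3; 18; 5; 1]; [::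 3; 18; 6; 7]; [:: 3; 19; 7; 1]; [:: 3; 19; 8; 9]; [:: 3; 20; 2; 5]; [:: 3; 20; 3; 20]; [:: 3; 21; 2; 9]; [:: 3; 21; 3; 21]; [:: 3; 22; 2; 8]; [:: 3; 22; 3; 22]; [:: 3; 23; 2; 7]; [:: 3; 23; 3; 23]; [:: 3; 24; 2; 6]; [:: 3; 24; 3; 24]];
 [:: [:: 4; 0; 1; 0]; [:: 4; 0; 4; 0]; [:: 4; 1; 4; 1]; [:: 4; 2; 1; 3]; [:: 4; 2; 4; 2]; [:: 4; 3; 1; 2]; [:: 4; 3; 4; 3]; [:: 4; 4; 4; 4]; [:: 4; 5; 10; 13]; [:: 4; 5; 12; 3]; [:: 4; 6; 12; 10]; [:: 4; 6; 14; 3]; [:: 4; 7; 11; 3]; [:: 4; 7; 14; 12]; [:: 4; 8; 11; 14]; [:: 4; 8; 13; 3]; [:: 4; 9; 10; 3]; [:: 4; 9; 13; 11]; [:: 4; 10; 1; 15]; [:: 4; 10; 4; 10]; [:: 4; 11; 1; 19]; [:: 4; 11; 4; 11]; [:: 4; 12; 1; 18]; [:: 4; 12; 4; 12]; [:: 4; 13; 1; 17]; [:: 4; 13; 4; 13]; [:: 4; 14; 1; 16]; [:: 4; 14; 4; 14]; [:: 4; 15; 1; 10]; [:: 4; 15; 4; 15]; [:: 4; 16; 1; 14]; [:: 4; 16; 4; 16]; [:: 4; 17; 1; 13]; [:: 4; 17; 4; 17]; [:: 4; 18; 1; 12]; [:: 4; 18; 4; 18]; [:: 4; 19; 1; 11];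 [:: 4; 19; 4; 19]; [:: 4; 20; 10; 17]; [:: 4; 20; 12; 2]; [:: 4; 21; 10; 2]; [:: 4; 21; 13; 19]; [:: 4; 22; 11; 16]; [:: 4; 22; 13; 2]; [:: 4; 23; 11; 2]; [:: 4; 23; 14; 18]; [:: 4; 24; 12; 15]; [:: 4; 24; 14; 2]];
 [:: [:: 5; 0; 5; 0]; [:: 5; 0; 20; 0]; [:: 5; 1; 2; 12]; [:: 5; 1; 17; 10]; [:: 5; 2; 5; 2]; [:: 5; 2; 20; 3]; [:: 5; 3; 5; 3]; [:: 5; 3; 20; 2]; [:: 5; 4; 2; 18]; [:: 5; 4; 17; 15]; [:: 5; 5; 5; 5]; [:: 5; 6; 2; 10]; [:: 5; 6; 12; 22]; [:: 5; 7; 5; 7]; [:: 5; 7; 20; 23]; [:: 5; 8; 5; 8]; [:: 5; 8; 20; 22]; [:: 5; 9; 7; 15]; [:: 5; 9; 17; 3]; [:: 5; 10; 5; 10]; [:: 5; 10; 20; 15]; [:: 5; 11; 12; 10]; [:: 5; 11; 22; 7]; [:: 5; 12; 5; 12]; [:: 5; 12; 20; 18]; [:: 5; 13; 5; 13]; [:: 5; 13; 20; 17]; [:: 5; 14; 7; 13]; [:: 5; 14; 22; 15]; [:: 5; 15; 5; 15]; [:: 5; 15; 20; 10]; [:: 5; 16; 7; 17]; [:: 5; 16; 22; 10]; [:: 5; 17; 5; 17]; [:: 5; 17; 20; 13]; [:: 5; 18; 5; 18]; [:: 5; 18; 20; 12]; [:: 5; 19; 12; 15]; [:: 5; 19; 22;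 23]; [:: 5; 20; 5; 20]; [:: 5; 21; 7; 10]; [:: 5; 21; 17; 2]; [:: 5; 22; 5; 22]; [:: 5; 22; 20; 8]; [:: 5; 23; 5; 23]; [:: 5; 23; 20; 7]; [:: 5; 24; 2; 15]; [:: 5; 24; 12; 8]];
 [:: [:: 6; 0; 6; 0]; [:: 6; 0; 24; 0]; [:: 6; 1; 2; 14]; [:: 6; 1; 15; 12]; [:: 6; 2; 6; 2]; [:: 6; 2; 24; 3]; [:: 6; 3; 6; 3]; [:: 6; 3; 24; 2]; [:: 6; 4; 2; 16]; [:: 6; 4; 15; 18]; [:: 6; 5; 8; 18]; [:: 6; 5; 15; 3]; [:: 6; 6; 6; 6]; [:: 6; 7; 2; 12]; [:: 6; 7; 14; 21]; [:: 6; 8; 6; 8]; [:: 6; 8; 24; 22]; [:: 6; 9; 6; 9]; [:: 6; 9; 24; 21]; [:: 6; 10; 6; 10]; [:: 6; 10; 24; 15]; [:: 6; 11; 8; 10]; [:: 6; 11; 21; 18]; [:: 6; 12; 6; 12]; [:: 6; 12; 24; 18]; [:: 6; 13; 14; 12]; [:: 6; 13; 21; 8]; [:: 6; 14; 6; 14]; [:: 6; 14; 24; 16]; [:: 6; 15; 6; 15]; [:: 6; 15; 24; 10]; [:: 6; 16; 6; 16]; [:: 6; 16; 24; 14]; [:: 6; 17; 14; 18]; [:: 6; 17; 21; 22]; [:: 6; 18; 6; 18]; [:: 6; 18; 24; 12]; [:: 6; 19; 8; 15]; [:: 6; 19; 21; 12]; [:: 6; 20; 8; 12]; [:: 6; 20;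 15; 2]; [:: 6; 21; 6; 21]; [:: 6; 21; 24; 9]; [:: 6; 22; 6; 22]; [:: 6; 22; 24; 8]; [:: 6; 23; 2; 18]; [:: 6; 23; 14; 9]; [:: 6; 24; 6; 24]];
 [:: [:: 7; 0; 7; 0]; [:: 7; 0; 23; 0]; [:: 7; 1; 2; 11]; [:: 7; 1; 18; 14]; [:: 7; 2; 7; 2]; [:: 7; 2; 23; 3]; [:: 7; 3; 7; 3]; [:: 7; 3; 23; 2]; [:: 7; 4; 2; 19]; [:: 7; 4; 18; 16]; [:: 7; 5; 7; 5]; [:: 7; 5; 23; 20]; [:: 7; 6; 9; 16]; [:: 7; 6; 18; 3]; [:: 7; 7; 7; 7]; [:: 7; 8; 2; 14]; [:: 7; 8; 11; 20]; [:: 7; 9; 7; 9]; [:: 7; 9; 23; 21]; [:: 7; 10; 11; 14]; [:: 7; 10; 20; 9]; [:: 7; 11; 7; 11]; [:: 7; 11; 23; 19]; [:: 7; 12; 7; 12]; [:: 7; 12; 23; 18]; [:: 7; 13; 9; 12]; [:: 7; 13; 20; 16]; [:: 7; 14; 7; 14]; [:: 7; 14; 23; 16]; [:: 7; 15; 11; 16]; [:: 7; 15; 20; 21]; [:: 7; 16; 7; 16]; [:: 7; 16; 23; 14]; [:: 7; 17; 9; 18]; [:: 7; 17; 20; 14]; [:: 7; 18; 7; 18]; [:: 7; 18; 23; 12]; [:: 7; 19; 7; 19]; [:: 7; 19; 23; 11]; [:: 7; 20; 7; 20]; [:: 7; 20; 23; 5]; [:: 7; 21; 7; 21]; [:: 7;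 21; 23; 9]; [:: 7; 22; 2; 16]; [:: 7; 22; 11; 5]; [:: 7; 23; 7; 23]; [:: 7; 24; 9; 14]; [:: 7; 24; 18; 2]];
 [:: [:: 8; 0; 8; 0]; [:: 8; 0; 22; 0]; [:: 8; 1; 2; 13]; [:: 8; 1; 16; 11]; [:: 8; 2; 8; 2]; [:: 8; 2; 22; 3]; [:: 8; 3; 8; 3]; [:: 8; 3; 22; 2]; [:: 8; 4; 2; 17]; [:: 8; 4; 16; 19]; [:: 8; 5; 8; 5]; [:: 8; 5; 22; 20]; [:: 8; 6; 8; 6]; [:: 8; 6; 22; 24]; [:: 8; 7; 5; 19]; [:: 8; 7; 16; 3]; [:: 8; 8; 8; 8]; [:: 8; 9; 2; 11]; [:: 8; 9; 13; 24]; [:: 8; 10; 5; 14]; [:: 8; 10; 24; 19]; [:: 8; 11; 8; 11]; [:: 8; 11; 22; 19]; [:: 8; 12; 13; 11]; [:: 8; 12; 24; 5]; [:: 8; 13; 8; 13]; [:: 8; 13; 22; 17]; [:: 8; 14; 8; 14]; [:: 8; 14; 22; 16]; [:: 8; 15; 5; 16]; [:: 8; 15; 24; 11]; [:: 8; 16; 8; 16]; [:: 8; 16; 22; 14]; [:: 8; 17; 8; 17]; [:: 8; 17; 22; 13]; [:: 8; 18; 13; 19]; [:: 8; 18; 24; 20]; [:: 8; 19; 8; 19]; [:: 8; 19; 22; 11]; [:: 8; 20; 8; 20]; [:: 8; 20; 22; 5]; [:: 8; 21; 2; 19]; [:: 8; 21; 13; 6]; [:: 8; 22; 8; 22]; [::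 8; 23; 5; 11]; [:: 8; 23; 16; 2]; [:: 8; 24; 8; 24]; [:: 8; 24; 22; 6]];
 [:: [:: 9; 0; 9; 0]; [:: 9; 0; 21; 0]; [:: 9; 1; 2; 10]; [:: 9; 1; 19; 13]; [:: 9; 2; 9; 2]; [:: 9; 2; 21; 3]; [:: 9; 3; 9; 3]; [:: 9; 3; 21; 2]; [:: 9; 4; 2; 15]; [:: 9; 4; 19; 17]; [:: 9; 5; 2; 13]; [:: 9; 5; 10; 23]; [:: 9; 6; 9; 6]; [:: 9; 6; 21; 24]; [:: 9; 7; 9; 7]; [:: 9; 7; 21; 23]; [:: 9; 8; 6; 17]; [:: 9; 8; 19; 3]; [:: 9; 9; 9; 9]; [:: 9; 10; 9; 10]; [:: 9; 10; 21; 15]; [:: 9; 11; 9; 11]; [:: 9; 11; 21; 19]; [:: 9; 12; 6; 11]; [:: 9; 12; 23; 17]; [:: 9; 13; 9; 13]; [:: 9; 13; 21; 17]; [:: 9; 14; 10; 13]; [:: 9; 14; 23; 6]; [:: 9; 15; 9; 15]; [:: 9; 15; 21; 10]; [:: 9; 16; 10; 17]; [:: 9; 16; 23; 24]; [:: 9; 17; 9; 17]; [:: 9; 17; 21; 13]; [:: 9; 18; 6; 19]; [:: 9; 18; 23; 13]; [:: 9; 19; 9; 19]; [:: 9; 19; 21; 11]; [:: 9; 20; 2; 17]; [:: 9; 20; 10; 7]; [:: 9; 21; 9; 21]; [:: 9; 22; 6; 13]; [:: 9; 22; 19; 2]; [:: 9; 23; 9; 23]; [:: 9; 23; 21; 7];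 [:: 9; 24; 9; 24]; [:: 9; 24; 21; 6]];
 [:: [:: 10; 0; 10; 0]; [:: 10; 0; 15; 0]; [:: 10; 1; 10; 1]; [:: 10; 1; 15; 4]; [:: 10; 2; 1; 9]; [:: 10; 2; 6; 5]; [:: 10; 3; 1; 21]; [:: 10; 3; 6; 20]; [:: 10; 4; 10; 4]; [:: 10; 4; 15; 1]; [:: 10; 5; 10; 5]; [:: 10; 5; 15; 20]; [:: 10; 6; 10; 6]; [:: 10; 6; 15; 24]; [:: 10; 7; 16; 19]; [:: 10; 7; 21; 5]; [:: 10; 8; 11; 6]; [:: 10; 8; 16; 20]; [:: 10; 9; 10; 9]; [:: 10; 9; 15; 21]; [:: 10; 10; 10; 10]; [:: 10; 11; 10; 11]; [:: 10; 11; 15; 19]; [:: 10; 12; 6; 4]; [:: 10; 12; 11; 5]; [:: 10; 13; 1; 20]; [:: 10; 13; 21; 16]; [:: 10; 14; 10; 14]; [:: 10; 14; 15; 16]; [:: 10; 15; 10; 15]; [:: 10; 16; 10; 16]; [:: 10; 16; 15; 14]; [:: 10; 17; 1; 5]; [:: 10; 17; 21; 14]; [:: 10; 18; 6; 1]; [:: 10; 18; 11; 20]; [:: 10; 19; 10; 19]; [:: 10; 19; 15; 11]; [:: 10; 20; 10; 20]; [:: 10; 20; 15; 5]; [:: 10; 21; 10; 21]; [:: 10; 21; 15; 9]; [:: 10; 22; 11; 24]; [:: 10; 22; 16; 5]; [:: 10; 23; 16; 11]; [:: 10; 23; 21; 20]; [:: 10; 24; 10; 24]; [:: 10; 24; 15;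 6]];
 [:: [:: 11; 0; 11; 0]; [:: 11; 0; 19; 0]; [:: 11; 1; 11; 1]; [:: 11; 1; 19; 4]; [:: 11; 2; 1; 7]; [:: 11; 2; 9; 8]; [:: 11; 3; 1; 23]; [:: 11; 3; 9; 22]; [:: 11; 4; 11; 4]; [:: 11; 4; 19; 1]; [:: 11; 5; 15; 18]; [:: 11; 5; 23; 8]; [:: 11; 6; 12; 9]; [:: 11; 6; 15; 22]; [:: 11; 7; 11; 7]; [:: 11; 7; 19; 23]; [:: 11; 8; 11; 8]; [:: 11; 8; 19; 22]; [:: 11; 9; 11; 9]; [:: 11; 9; 19; 21]; [:: 11; 10; 11; 10]; [:: 11; 10; 19; 15]; [:: 11; 11; 11; 11]; [:: 11; 12; 11; 12]; [:: 11; 12; 19; 18]; [:: 11; 13; 9; 4]; [:: 11; 13; 12; 8]; [:: 11; 14; 1; 22]; [:: 11; 14; 23; 15]; [:: 11; 15; 11; 15]; [:: 11; 15; 19; 10]; [:: 11; 16; 1; 8]; [:: 11; 16; 23; 10]; [:: 11; 17; 9; 1]; [:: 11; 17; 12; 22]; [:: 11; 18; 11; 18]; [:: 11; 18; 19; 12]; [:: 11; 19; 11; 19]; [:: 11; 20; 15; 12]; [:: 11; 20; 23; 22]; [:: 11; 21; 11; 21]; [:: 11; 21; 19; 9]; [:: 11; 22; 11; 22]; [:: 11; 22; 19; 8]; [:: 11; 23; 11; 23]; [:: 11; 23; 19; 7]; [:: 11; 24; 12; 21]; [:: 11; 24; 15; 8]];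
 [:: [:: 12; 0; 12; 0]; [:: 12; 0; 18; 0]; [:: 12; 1; 12; 1]; [:: 12; 1; 18; 4]; [:: 12; 2; 1; 5]; [:: 12; 2; 7; 6]; [:: 12; 3; 1; 20]; [:: 12; 3; 7; 24]; [:: 12; 4; 12; 4]; [:: 12; 4; 18; 1]; [:: 12; 5; 12; 5]; [:: 12; 5; 18; 20]; [:: 12; 6; 12; 6]; [:: 12; 6; 18; 24]; [:: 12; 7; 12; 7]; [:: 12; 7; 18; 23]; [:: 12; 8; 19; 17]; [:: 12; 8; 20; 6]; [:: 12; 9; 13; 7]; [:: 12; 9; 19; 24]; [:: 12; 10; 1; 24]; [:: 12; 10; 20; 19]; [:: 12; 11; 12; 11]; [:: 12; 11; 18; 19]; [:: 12; 12; 12; 12]; [:: 12; 13; 12; 13]; [:: 12; 13; 18; 17]; [:: 12; 14; 7; 4]; [:: 12; 14; 13; 6]; [:: 12; 15; 1; 6]; [:: 12; 15; 20; 11]; [:: 12; 16; 7; 1]; [:: 12; 16; 13; 24]; [:: 12; 17; 12; 17]; [:: 12; 17; 18; 13]; [:: 12; 18; 12; 18]; [:: 12; 19; 12; 19]; [:: 12; 19; 18; 11]; [:: 12; 20; 12; 20]; [:: 12; 20; 18; 5]; [:: 12; 21; 13; 23]; [:: 12; 21; 19; 6]; [:: 12; 22; 19; 13]; [:: 12; 22; 20; 24]; [:: 12; 23; 12; 23]; [:: 12; 23; 18; 7]; [:: 12; 24; 12; 24]; [:: 12; 24; 18; 6]];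
 [:: [:: 13; 0; 13; 0]; [:: 13; 0; 17; 0]; [:: 13; 1; 13; 1]; [:: 13; 1; 17; 4]; [:: 13; 2; 1; 8]; [:: 13; 2; 5; 9]; [:: 13; 3; 1; 22]; [:: 13; 3; 5; 21]; [:: 13; 4; 13; 4]; [:: 13; 4; 17; 1]; [:: 13; 5; 13; 5]; [:: 13; 5; 17; 20]; [:: 13; 6; 18; 16]; [:: 13; 6; 22; 9]; [:: 13; 7; 14; 5]; [:: 13; 7; 18; 21]; [:: 13; 8; 13; 8]; [:: 13; 8; 17; 22]; [:: 13; 9; 13; 9]; [:: 13; 9; 17; 21]; [:: 13; 10; 5; 4]; [:: 13; 10; 14; 9]; [:: 13; 11; 1; 21]; [:: 13; 11; 22; 18]; [:: 13; 12; 13; 12]; [:: 13; 12; 17; 18]; [:: 13; 13; 13; 13]; [:: 13; 14; 13; 14]; [:: 13; 14; 17; 16]; [:: 13; 15; 5; 1]; [:: 13; 15; 14; 21]; [:: 13; 16; 13; 16]; [:: 13; 16; 17; 14]; [:: 13; 17; 13; 17]; [:: 13; 18; 13; 18]; [:: 13; 18; 17; 12]; [:: 13; 19; 1; 9]; [:: 13; 19; 22; 12]; [:: 13; 20; 13; 20]; [:: 13; 20; 17; 5]; [:: 13; 21; 13; 21]; [:: 13; 21; 17; 9]; [:: 13; 22; 13; 22]; [:: 13; 22; 17; 8]; [:: 13; 23; 14; 20]; [:: 13; 23; 18; 9]; [:: 13; 24; 18; 14]; [:: 13; 24; 22; 21]];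
 [:: [:: 14; 0; 14; 0]; [:: 14; 0; 16; 0]; [:: 14; 1; 14; 1]; [:: 14; 1; 16; 4]; [:: 14; 2; 1; 6]; [:: 14; 2; 8; 7]; [:: 14; 3; 1; 24]; [:: 14; 3; 8; 23]; [:: 14; 4; 14; 4]; [:: 14; 4; 16; 1]; [:: 14; 5; 10; 8]; [:: 14; 5; 17; 23]; [:: 14; 6; 14; 6]; [:: 14; 6; 16; 24]; [:: 14; 7; 14; 7]; [:: 14; 7; 16; 23]; [:: 14; 8; 14; 8]; [:: 14; 8; 16; 22]; [:: 14; 9; 17; 15]; [:: 14; 9; 24; 7]; [:: 14; 10; 14; 10]; [:: 14; 10; 16; 15]; [:: 14; 11; 8; 4]; [:: 14; 11; 10; 7]; [:: 14; 12; 1; 23]; [:: 14; 12; 24; 17]; [:: 14; 13; 14; 13]; [:: 14; 13; 16; 17]; [:: 14; 14; 14; 14]; [:: 14; 15; 14; 15]; [:: 14; 15; 16; 10]; [:: 14; 16; 14; 16]; [:: 14; 17; 14; 17]; [:: 14; 17; 16; 13]; [:: 14; 18; 1; 7]; [:: 14; 18; 24; 13]; [:: 14; 19; 8; 1]; [:: 14; 19; 10; 23]; [:: 14; 20; 10; 22]; [:: 14; 20; 17; 7]; [:: 14; 21; 17; 10]; [:: 14; 21; 24; 23]; [:: 14; 22; 14; 22]; [:: 14; 22; 16; 8]; [:: 14; 23; 14; 23]; [:: 14; 23; 16; 7]; [:: 14; 24; 14; 24]; [:: 14; 24; 16; 6]];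
 [:: [:: 15; 0; 10; 0]; [:: 15; 0; 15; 0]; [:: 15; 1; 10; 4]; [:: 15; 1; 15; 1]; [:: 15; 2; 4; 9]; [:: 15; 2; 24; 5]; [:: 15; 3; 4; 21]; [:: 15; 3; 24; 20]; [:: 15; 4; 10; 1]; [:: 15; 4; 15; 4]; [:: 15; 5; 10; 20]; [:: 15; 5; 15; 5]; [:: 15; 6; 10; 24]; [:: 15; 6; 15; 6]; [:: 15; 7; 9; 5]; [:: 15; 7; 14; 19]; [:: 15; 8; 14; 20]; [:: 15; 8; 19; 6]; [:: 15; 9; 10; 21]; [:: 15; 9; 15; 9]; [:: 15; 10; 15; 10]; [:: 15; 11; 10; 19]; [:: 15; 11; 15; 11]; [:: 15; 12; 19; 5]; [:: 15; 12; 24; 4]; [:: 15; 13; 4; 20]; [:: 15; 13; 9; 16]; [:: 15; 14; 10; 16]; [:: 15; 14; 15; 14]; [:: 15; 15; 15; 15]; [:: 15; 16; 10; 14]; [:: 15; 16; 15; 16]; [:: 15; 17; 4; 5]; [:: 15; 17; 9; 14]; [:: 15; 18; 19; 20]; [:: 15; 18; 24; 1]; [:: 15; 19; 10; 11]; [:: 15; 19; 15; 19]; [:: 15; 20; 10; 5]; [:: 15; 20; 15; 20]; [:: 15; 21; 10; 9]; [:: 15; 21; 15; 21]; [:: 15; 22; 14; 5]; [:: 15; 22; 19; 24]; [:: 15; 23; 9; 20]; [:: 15; 23; 14; 11]; [:: 15; 24; 10; 6]; [:: 15; 24; 15; 24]];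
 [:: [:: 16; 0; 14; 0]; [:: 16; 0; 16; 0]; [:: 16; 1; 14; 4]; [:: 16; 1; 16; 1]; [:: 16; 2; 4; 6]; [:: 16; 2; 22; 7]; [:: 16; 3; 4; 24]; [:: 16; 3; 22; 23]; [:: 16; 4; 14; 1]; [:: 16; 4; 16; 4]; [:: 16; 5; 13; 23]; [:: 16; 5; 15; 8]; [:: 16; 6; 14; 24]; [:: 16; 6; 16; 6]; [:: 16; 7; 14; 23]; [:: 16; 7; 16; 7]; [:: 16; 8; 14; 22]; [:: 16; 8; 16; 8]; [:: 16; 9; 6; 7]; [:: 16; 9; 13; 15]; [:: 16; 10; 14; 15]; [:: 16; 10; 16; 10]; [:: 16; 11; 15; 7]; [:: 16; 11; 22; 4]; [:: 16; 12; 4; 23]; [:: 16; 12; 6; 17]; [:: 16; 13; 14; 17]; [:: 16; 13; 16; 13]; [:: 16; 14; 16; 14]; [:: 16; 15; 14; 10]; [:: 16; 15; 16; 15]; [:: 16; 16; 16; 16]; [:: 16; 17; 14; 13]; [:: 16; 17; 16; 17]; [:: 16; 18; 4; 7]; [:: 16; 18; 6; 13]; [:: 16; 19; 15; 23]; [:: 16; 19; 22; 1]; [:: 16; 20; 13; 7]; [:: 16; 20; 15; 22]; [:: 16; 21; 6; 23]; [:: 16; 21; 13; 10]; [:: 16; 22; 14; 8]; [:: 16; 22; 16; 22]; [:: 16; 23; 14; 7]; [:: 16; 23; 16; 23]; [:: 16; 24; 14; 6]; [:: 16; 24; 16; 24]];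
 [:: [:: 17; 0; 13; 0]; [:: 17; 0; 17; 0]; [:: 17; 1; 13; 4]; [:: 17; 1; 17; 1]; [:: 17; 2; 4; 8]; [:: 17; 2; 20; 9]; [:: 17; 3; 4; 22]; [:: 17; 3; 20; 21]; [:: 17; 4; 13; 1]; [:: 17; 4; 17; 4]; [:: 17; 5; 13; 20]; [:: 17; 5; 17; 5]; [:: 17; 6; 8; 9]; [:: 17; 6; 12; 16]; [:: 17; 7; 12; 21]; [:: 17; 7; 16; 5]; [:: 17; 8; 13; 22]; [:: 17; 8; 17; 8]; [:: 17; 9; 13; 21]; [:: 17; 9; 17; 9]; [:: 17; 10; 16; 9]; [:: 17; 10; 20; 4]; [:: 17; 11; 4; 21]; [:: 17; 11; 8; 18]; [:: 17; 12; 13; 18]; [:: 17; 12; 17; 12]; [:: 17; 13; 17; 13]; [:: 17; 14; 13; 16]; [:: 17; 14; 17; 14]; [:: 17; 15; 16; 21]; [:: 17; 15; 20; 1]; [:: 17; 16; 13; 14]; [:: 17; 16; 17; 16]; [:: 17; 17; 17; 17]; [:: 17; 18; 13; 12]; [:: 17; 18; 17; 18]; [:: 17; 19; 4; 9]; [:: 17; 19; 8; 12]; [:: 17; 20; 13; 5]; [:: 17; 20; 17; 20]; [:: 17; 21; 13; 9]; [:: 17; 21; 17; 21]; [:: 17; 22; 13; 8]; [:: 17; 22; 17; 22]; [:: 17; 23; 12; 9]; [:: 17; 23; 16; 20]; [:: 17; 24; 8; 21]; [:: 17; 24; 12; 14]];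
 [:: [:: 18; 0; 12; 0]; [:: 18; 0; 18; 0]; [:: 18; 1; 12; 4]; [:: 18; 1; 18; 1]; [:: 18; 2; 4; 5]; [:: 18; 2; 23; 6]; [:: 18; 3; 4; 20]; [:: 18; 3; 23; 24]; [:: 18; 4; 12; 1]; [:: 18; 4; 18; 4]; [:: 18; 5; 12; 20]; [:: 18; 5; 18; 5]; [:: 18; 6; 12; 24]; [:: 18; 6; 18; 6]; [:: 18; 7; 12; 23]; [:: 18; 7; 18; 7]; [:: 18; 8; 5; 6]; [:: 18; 8; 11; 17]; [:: 18; 9; 11; 24]; [:: 18; 9; 17; 7]; [:: 18; 10; 4; 24]; [:: 18; 10; 5; 19]; [:: 18; 11; 12; 19]; [:: 18; 11; 18; 11]; [:: 18; 12; 18; 12]; [:: 18; 13; 12; 17]; [:: 18; 13; 18; 13]; [:: 18; 14; 17; 6]; [:: 18; 14; 23; 4]; [:: 18; 15; 4; 6]; [:: 18; 15; 5; 11]; [:: 18; 16; 17; 24]; [:: 18; 16; 23; 1]; [:: 18; 17; 12; 13]; [:: 18; 17; 18; 17]; [:: 18; 18; 18; 18]; [:: 18; 19; 12; 11]; [:: 18; 19; 18; 19]; [:: 18; 20; 12; 5]; [:: 18; 20; 18; 20]; [:: 18; 21; 11; 6]; [:: 18; 21; 17; 23]; [:: 18; 22; 5; 24]; [:: 18; 22; 11; 13]; [:: 18; 23; 12; 7]; [:: 18; 23; 18; 23]; [:: 18; 24; 12; 6]; [:: 18; 24; 18; 24]];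
 [:: [:: 19; 0; 11; 0]; [:: 19; 0; 19; 0]; [:: 19; 1; 11; 4]; [:: 19; 1; 19; 1]; [:: 19; 2; 4; 7]; [:: 19; 2; 21; 8]; [:: 19; 3; 4; 23]; [:: 19; 3; 21; 22]; [:: 19; 4; 11; 1]; [:: 19; 4; 19; 4]; [:: 19; 5; 7; 8]; [:: 19; 5; 10; 18]; [:: 19; 6; 10; 22]; [:: 19; 6; 18; 9]; [:: 19; 7; 11; 23]; [:: 19; 7; 19; 7]; [:: 19; 8; 11; 22]; [:: 19; 8; 19; 8]; [:: 19; 9; 11; 21]; [:: 19; 9; 19; 9]; [:: 19; 10; 11; 15]; [:: 19; 10; 19; 10]; [:: 19; 11; 19; 11]; [:: 19; 12; 11; 18]; [:: 19; 12; 19; 12]; [:: 19; 13; 18; 8]; [:: 19; 13; 21; 4]; [:: 19; 14; 4; 22]; [:: 19; 14; 7; 15]; [:: 19; 15; 11; 10]; [:: 19; 15; 19; 15]; [:: 19; 16; 4; 8]; [:: 19; 16; 7; 10]; [:: 19; 17; 18; 22]; [:: 19; 17; 21; 1]; [:: 19; 18; 11; 12]; [:: 19; 18; 19; 18]; [:: 19; 19; 19; 19]; [:: 19; 20; 7; 22]; [:: 19; 20; 10; 12]; [:: 19; 21; 11; 9]; [:: 19; 21; 19; 21]; [:: 19; 22; 11; 8]; [:: 19; 22; 19; 22]; [:: 19; 23; 11; 7]; [:: 19; 23; 19; 23]; [:: 19; 24; 10; 8]; [:: 19; 24; 18; 21]];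
 [:: [:: 20; 0; 5; 0]; [:: 20; 0; 20; 0]; [:: 20; 1; 3; 12]; [:: 20; 1; 13; 10]; [:: 20; 2; 5; 3]; [:: 20; 2; 20; 2]; [:: 20; 3; 5; 2]; [:: 20; 3; 20; 3]; [:: 20; 4; 3; 18]; [:: 20; 4; 13; 15]; [:: 20; 5; 20; 5]; [:: 20; 6; 3; 10]; [:: 20; 6; 18; 22]; [:: 20; 7; 5; 23]; [:: 20; 7; 20; 7]; [:: 20; 8; 5; 22]; [:: 20; 8; 20; 8]; [:: 20; 9; 13; 3]; [:: 20; 9; 23; 15]; [:: 20; 10; 5; 15]; [:: 20; 10; 20; 10]; [:: 20; 11; 8; 7]; [:: 20; 11; 18; 10]; [:: 20; 12; 5; 18]; [:: 20; 12; 20; 12]; [:: 20; 13; 5; 17]; [:: 20; 13; 20; 13]; [:: 20; 14; 8; 15]; [:: 20; 14; 23; 13]; [:: 20; 15; 5; 10]; [:: 20; 15; 20; 15]; [:: 20; 16; 8; 10]; [:: 20; 16; 23; 17]; [:: 20; 17; 5; 13]; [:: 20; 17; 20; 17]; [:: 20; 18; 5; 12]; [:: 20; 18; 20; 18]; [:: 20; 19; 8; 23]; [:: 20; 19; 18; 15]; [:: 20; 20; 20; 20]; [:: 20; 21; 13; 2]; [:: 20; 21; 23; 10]; [:: 20; 22; 5; 8]; [:: 20; 22; 20; 22]; [:: 20; 23; 5; 7]; [:: 20; 23; 20; 23]; [:: 20; 24; 3; 15]; [:: 20; 24; 18; 8]];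
 [:: [:: 21; 0; 9; 0]; [:: 21; 0; 21; 0]; [:: 21; 1; 3; 10]; [:: 21; 1; 11; 13]; [:: 21; 2; 9; 3]; [:: 21; 2; 21; 2]; [:: 21; 3; 9; 2]; [:: 21; 3; 21; 3]; [:: 21; 4; 3; 15]; [:: 21; 4; 11; 17]; [:: 21; 5; 3; 13]; [:: 21; 5; 15; 23]; [:: 21; 6; 9; 24]; [:: 21; 6; 21; 6]; [:: 21; 7; 9; 23]; [:: 21; 7; 21; 7]; [:: 21; 8; 11; 3]; [:: 21; 8; 24; 17]; [:: 21; 9; 21; 9]; [:: 21; 10; 9; 15]; [:: 21; 10; 21; 10]; [:: 21; 11; 9; 19]; [:: 21; 11; 21; 11]; [:: 21; 12; 7; 17]; [:: 21; 12; 24; 11]; [:: 21; 13; 9; 17]; [:: 21; 13; 21; 13]; [:: 21; 14; 7; 6]; [:: 21; 14; 15; 13]; [:: 21; 15; 9; 10]; [:: 21; 15; 21; 15]; [:: 21; 16; 7; 24]; [:: 21; 16; 15; 17]; [:: 21; 17; 9; 13]; [:: 21; 17; 21; 17]; [:: 21; 18; 7; 13]; [:: 21; 18; 24; 19]; [:: 21; 19; 9; 11]; [:: 21; 19; 21; 19]; [:: 21; 20; 3; 17]; [:: 21; 20; 15; 7]; [:: 21; 21; 21; 21]; [:: 21; 22; 11; 2]; [:: 21; 22; 24; 13]; [:: 21; 23; 9; 7]; [:: 21; 23; 21; 23]; [:: 21; 24; 9; 6]; [:: 21; 24; 21; 24]];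
 [:: [:: 22; 0; 8; 0]; [:: 22; 0; 22; 0]; [:: 22; 1; 3; 13]; [:: 22; 1; 14; 11]; [:: 22; 2; 8; 3]; [:: 22; 2; 22; 2]; [:: 22; 3; 8; 2]; [:: 22; 3; 22; 3]; [:: 22; 4; 3; 17]; [:: 22; 4; 14; 19]; [:: 22; 5; 8; 20]; [:: 22; 5; 22; 5]; [:: 22; 6; 8; 24]; [:: 22; 6; 22; 6]; [:: 22; 7; 14; 3]; [:: 22; 7; 20; 19]; [:: 22; 8; 22; 8]; [:: 22; 9; 3; 11]; [:: 22; 9; 17; 24]; [:: 22; 10; 6; 19]; [:: 22; 10; 20; 14]; [:: 22; 11; 8; 19]; [:: 22; 11; 22; 11]; [:: 22; 12; 6; 5]; [:: 22; 12; 17; 11]; [:: 22; 13; 8; 17]; [:: 22; 13; 22; 13]; [:: 22; 14; 8; 16]; [:: 22; 14; 22; 14]; [:: 22; 15; 6; 11]; [:: 22; 15; 20; 16]; [:: 22; 16; 8; 14]; [:: 22; 16; 22; 16]; [:: 22; 17; 8; 13]; [:: 22; 17; 22; 17]; [:: 22; 18; 6; 20]; [:: 22; 18; 17; 19]; [:: 22; 19; 8; 11]; [:: 22; 19; 22; 19]; [:: 22; 20; 8; 5]; [:: 22; 20; 22; 20]; [:: 22; 21; 3; 19]; [:: 22; 21; 17; 6]; [:: 22; 22; 22; 22]; [:: 22; 23; 14; 2]; [:: 22; 23; 20; 11]; [:: 22; 24; 8; 6]; [:: 22; 24; 22; 24]];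
 [:: [:: 23; 0; 7; 0]; [:: 23; 0; 23; 0]; [:: 23; 1; 3; 11]; [:: 23; 1; 12; 14]; [:: 23; 2; 7; 3]; [:: 23; 2; 23; 2]; [:: 23; 3; 7; 2]; [:: 23; 3; 23; 3]; [:: 23; 4; 3; 19]; [:: 23; 4; 12; 16]; [:: 23; 5; 7; 20]; [:: 23; 5; 23; 5]; [:: 23; 6; 12; 3]; [:: 23; 6; 21; 16]; [:: 23; 7; 23; 7]; [:: 23; 8; 3; 14]; [:: 23; 8; 19; 20]; [:: 23; 9; 7; 21]; [:: 23; 9; 23; 9]; [:: 23; 10; 5; 9]; [:: 23; 10; 19; 14]; [:: 23; 11; 7; 19]; [:: 23; 11; 23; 11]; [:: 23; 12; 7; 18]; [:: 23; 12; 23; 12]; [:: 23; 13; 5; 16]; [:: 23; 13; 21; 12]; [:: 23; 14; 7; 16]; [:: 23; 14; 23; 14]; [:: 23; 15; 5; 21]; [:: 23; 15; 19; 16]; [:: 23; 16; 7; 14]; [:: 23; 16; 23; 16]; [:: 23; 17; 5; 14]; [:: 23; 17; 21; 18]; [:: 23; 18; 7; 12]; [:: 23; 18; 23; 18]; [:: 23; 19; 7; 11]; [:: 23; 19; 23; 19]; [:: 23; 20; 7; 5]; [:: 23; 20; 23; 20]; [:: 23; 21; 7; 9]; [:: 23; 21; 23; 21]; [:: 23; 22; 3; 16]; [:: 23; 22; 19; 5]; [:: 23; 23; 23; 23]; [:: 23; 24; 12; 2]; [:: 23; 24; 21; 14]];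
 [:: [:: 24; 0; 6; 0]; [:: 24; 0; 24; 0]; [:: 24; 1; 3; 14]; [:: 24; 1; 10; 12]; [:: 24; 2; 6; 3]; [:: 24; 2; 24; 2]; [:: 24; 3; 6; 2]; [:: 24; 3; 24; 3]; [:: 24; 4; 3; 16]; [:: 24; 4; 10; 18]; [:: 24; 5; 10; 3]; [:: 24; 5; 22; 18]; [:: 24; 6; 24; 6]; [:: 24; 7; 3; 12]; [:: 24; 7; 16; 21]; [:: 24; 8; 6; 22]; [:: 24; 8; 24; 8]; [:: 24; 9; 6; 21]; [:: 24; 9; 24; 9]; [:: 24; 10; 6; 15]; [:: 24; 10; 24; 10]; [:: 24; 11; 9; 18]; [:: 24; 11; 22; 10]; [:: 24; 12; 6; 18]; [:: 24; 12; 24; 12]; [:: 24; 13; 9; 8]; [:: 24; 13; 16; 12]; [:: 24; 14; 6; 16]; [:: 24; 14; 24; 14]; [:: 24; 15; 6; 10]; [:: 24; 15; 24; 15]; [:: 24; 16; 6; 14]; [:: 24; 16; 24; 16]; [:: 24; 17; 9; 22]; [:: 24; 17; 16; 18]; [:: 24; 18; 6; 12]; [:: 24; 18; 24; 18]; [:: 24; 19; 9; 12]; [:: 24; 19; 22; 15]; [:: 24; 20; 10; 2]; [:: 24; 20; 22; 12]; [:: 24; 21; 6; 9]; [:: 24; 21; 24; 21]; [:: 24; 22; 6; 8]; [:: 24; 22; 24; 22]; [:: 24; 23; 3; 18]; [:: 24; 23; 16; 9]; [:: 24; 24; 24; 24]]].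
Definition mkrels (l : seq (nat * nat * nat)) : seq cstr := map (fun t => Rel t.1.1 t.1.2 t.2) l.
Definition relsA : seq (nat * nat * nat) := [:: (19,15,14); (22,15,13); (20,16,14); (21,16,13); (14,17,21); (13,18,21); (20,17,22); (19,18,22); (21,23,20); (22,24,20); (26,23,19); (25,24,19)].
Definition relsM : seq (nat * nat * nat) := [:: (2,1,26); (26,27,1); (1,2,3); (3,4,1); (4,5,3); (5,6,7); (8,7,6); (29,28,6); (3,6,28); (9,8,7); (7,10,9); (11,9,10); (10,11,12); (13,2,4); (12,14,13); (30,28,29); (29,31,30); (32,30,31); (31,33,32); (34,32,33); (33,35,34)].
Definition renB (i : nat) : nat := if i == 19 then 40 else if i == 15 then 36 else if i == 14 then 35 else if i == 22 then 38 else if i == 13 then 34 else if i == 20 then 41 else if i == 16 then 37 else if i == 21 then 39 else if i == 17 then 42 else if i == 18 then 43 else if i == 23 then 44 else if i == 24 then 45 else if i == 26 then 25 else if i == 25 then 27 else i.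
Definition relsB : seq (nat * nat * nat) := map (fun t => (renB t.1.1, renB t.1.2, renB t.2)) relsA.
Definition varsA : seq nat := [:: 13; 14; 15; 16; 17; 18; 19; 20; 21; 22; 23; 24; 25; 26].
Definition ordA : seq nat := [:: 13; 14; 15; 16; 17; 18; 19; 20; 21; 22; 23; 24; 25; 26].
Definition allEq (s : seq nat) := all (eq_op (head 0 s)) s.
Definition goalsA : seq cstr := [:: Tab [:: 13; 14; 25; 26] TA; Gen varsA (fun s => (nth 0 s 0 == nth 0 s 1) ==> allEq s)].
Definition csA := mkrels relsA.
Definition csM := Tab [:: 13; 14; 25; 26] TA :: Tab [:: 34; 35; 27; 25] TA :: mkrels relsM.
Definition ordM : seq nat := [:: 3; 6; 34; 35; 1; 13; 7; 2; 4; 5; 8; 9; 10; 11; 12; 14; 25; 26; 27; 28; 29; 30; 31; 32; 33].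
Definition K1M : seq nat := [:: 1; 2; 12; 13; 14; 25; 26; 27; 28; 29; 30; 31; 32; 33; 34; 35].
Definition K2 : seq nat := [:: 3; 4; 5; 6].
Definition K3 : seq nat := [:: 7; 8; 9; 10; 11].
Definition orthP (s : seq nat) := all (fun p => all (fun q => opn p q == p) s) s.
Definition goalsM : seq cstr := [:: Gen K1M allEq; Gen K2 allEq; Gen K3 allEq; Gen [:: 1; 3; 7] orthP].
Definition cl1 : seq nat := [:: 0; 0; 1; 1; 1; 1; 2; 2; 2; 2; 2; 0; 0; 0; 0; 0; 0; 0; 0; 0; 0; 0; 0; 0; 0; 0; 0; 0; 0; 0; 0; 0; 0; 0; 0; 0; 0; 0; 0; 0; 0; 0; 0; 0; 0].
Definition cl2 : seq nat := [:: 0; 0; 1; 1; 1; 1; 2; 2; 2; 2; 2; 0; 0; 0; 0; 0; 0; 0; 0; 0; 0; 0; 0; 0; 0; 0; 0; 0; 0; 0; 0; 0; 0; 0; 0; 0; 0; 0; 0; 0; 0; 0; 0; 0; 0; 0; 1; 0; 0; 0; 0; 0; 0; 0; 0; 0; 0; 0; 0; 0; 0; 0; 0; 0; 0; 0; 1; 0; 0; 0; 0; 0; 0; 0; 0; 0; 0; 0; 0; 0; 0; 0; 0; 0; 0].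

Lemma agree_nseq f n : agree f (nseq n None).
Proof. by move=> i x; rewrite nth_nseq; case: ifP. Qed.

Lemma searchA_ok : search csA ordA goalsA 50 (nseq 46 None).
Proof. vm_compute. reflexivity. Qed.

Lemma searchM_ok : search csM ordM goalsM 60 (nseq 46 None).
Proof. vm_compute. reflexivity. Qed.

Lemma tangleA h : (forall i, h i < 25) -> all (holds h) csA -> all (holds h) goalsA.
Proof. move=> Hb Hcs; exact: (search_sound Hb Hcs searchA_ok (@agree_nseq h 46)). Qed.

Lemma mainM h : (forall i, h i < 25) -> all (holds h) csM -> all (holds h) goalsM.
Proof. move=> Hb Hcs; exact: (search_sound Hb Hcs searchM_ok (@agree_nseq h 46)). Qed.

Lemma mkrels_holds h l : all (holds h) (mkrels l) = all (fun t => h t.1.1 == opn (h t.1.2) (h t.2)) l.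
Proof. by elim: l => //= t l ->. Qed.

Lemma renB_holds h : all (holds (fun i => h (renB i))) csA = all (holds h) (mkrels relsB).
Proof. by rewrite /csA !mkrels_holds /relsB; elim: relsA => //= t l ->. Qed.

Lemma subrels_ok : [&& all (fun t => t \in Rrels) relsA, all (fun t => t \in Rrels) relsB
                      & all (fun t => t \in Rrels) relsM].
Proof. vm_compute. reflexivity. Qed.

Definition repv (p : nat) : nat := nth 0 [:: 1; 3; 7] p.

Lemma cl1_ok : all (fun i => let p := nth 0 cl1 i in
   if p == 0 then [|| i.+1 \in K1M, i.+1 \in varsA | i.+1 \in map renB varsA]
   else if p == 1 then i.+1 \in K2 else (p == 2) && (i.+1 \in K3)) (iota 0 45).
Proof. vm_compute. reflexivity. Qed.

Lemma cl2_ok : all (fun t => [&& 0 < t.1.1 <= 85, 0 < t.1.2 <= 85, 0 < t.2 <= 85 &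
                  nth 0 cl2 t.1.1.-1 == nth 0 cl2 t.1.2.-1]) Srels.
Proof. vm_compute. reflexivity. Qed.

Lemma cl1_b : all (fun p => p < 3) cl1. Proof. vm_compute. reflexivity. Qed.
Lemma cl2_b : all (fun p => p < 3) cl2. Proof. vm_compute. reflexivity. Qed.
Lemma size_cl1 : size cl1 = 45. Proof. vm_compute. reflexivity. Qed.
Lemma size_cl2 : size cl2 = 85. Proof. vm_compute. reflexivity. Qed.
Lemma cl1_m : [&& 0 \in cl1, 1 \in cl1 & 2 \in cl1]. Proof. vm_compute. reflexivity. Qed.
Lemma cl2_m : [&& 0 \in cl2, 1 \in cl2 & 2 \in cl2]. Proof. vm_compute. reflexivity. Qed.

Section TLevel.
Import GRing.Theory.
Local Open Scope ring_scope.

Definition i1 : 'I_2 := lift ord0 ord0.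

Lemma sformE (x y : T) : sform x y = x 0 ord0 * y 0 i1 - x 0 i1 * y 0 ord0.
Proof.
rewrite /sform !mxE !big_ord_recl !big_ord0 !mxE !big_ord_recl !big_ord0 /Asymp !mxE /=.
ring.
Qed.

Lemma qopE (x y : T) j : qop x y 0 j = x 0 j + (x 0 ord0 * y 0 i1 - x 0 i1 * y 0 ord0) * y 0 j.
Proof. by rewrite /qop !mxE sformE. Qed.

Definition enc (x : T) : nat := addn (muln 5 (x 0 ord0)) (x 0 i1).

Lemma F5_lt (a : 'F_5) : (a < 5)%N.
Proof. exact: ltn_ord a. Qed.

Lemma enc_lt x : (enc x < 25)%N.
Proof.
rewrite /enc; have := F5_lt (x 0 ord0); have := F5_lt (x 0 i1).
move: (nat_of_ord (x 0 ord0)) (nat_of_ord (x 0 i1)) => a b Hb Ha.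
lia.
Qed.

Definition qc (a b c d : 'F_5) : 'F_5 * 'F_5 := let k := a * d - b * c in (a + k * c, b + k * d).

Definition F5l : seq 'F_5 := [:: 0; 1; 2; 3; 4].

Lemma F5l_all (a : 'F_5) : a \in F5l.
Proof.
case: a => [[|[|[|[|[|m]]]]] Hm].
- by have -> : Ordinal Hm = 0 :> 'F_5 by apply: val_inj.
- by have -> : Ordinal Hm = 1 :> 'F_5 by apply: val_inj.
- by have -> : Ordinal Hm = 2 :> 'F_5 by apply: val_inj.
- by have -> : Ordinal Hm = 3 :> 'F_5 by apply: val_inj.
- by have -> : Ordinal Hm = 4 :> 'F_5 by apply: val_inj.
- by [].
Qed.

Lemma arith_check : all (fun a => all (fun b => all (fun c => all (fun d =>
  addn (muln 5 (qc a b c d).1) (qc a b c d).2 == opn (addn (muln 5 a) b) (addn (muln 5 c) d))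
  F5l) F5l) F5l) F5l.
Proof. vm_compute. reflexivity. Qed.

Lemma enc_op x y : enc (qop x y) = opn (enc x) (enc y).
Proof.
rewrite /enc !qopE.
have /allP/(_ (x 0 ord0) (F5l_all _))/allP/(_ (x 0 i1) (F5l_all _))/allP/(_ (y 0 ord0) (F5l_all _))
  /allP/(_ (y 0 i1) (F5l_all _))/eqP := arith_check.
by [].
Qed.

Lemma enc_inj x y : enc x = enc y -> x = y.
Proof.
rewrite /enc => E.
have := F5_lt (x 0 ord0); have := F5_lt (x 0 i1);
have := F5_lt (y 0 ord0); have := F5_lt (y 0 i1).
move=> H1 H2 H3 H4.
have E0 : nat_of_ord (x 0 ord0) = nat_of_ord (y 0 ord0) by lia.
have E1 : nat_of_ord (x 0 i1) = nat_of_ord (y 0 i1) by lia.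
apply/rowP => j; case: j => [[|[|m]] Hj].
- have -> : Ordinal Hj = ord0 by apply: val_inj.
  exact: val_inj E0.
- have -> : Ordinal Hj = i1 by apply: val_inj.
  exact: val_inj E1.
- by [].
Qed.

End TLevel.

Lemma mem_sel (sel : nat -> T) (cl : seq nat) x :
  all (fun p => p < 3) cl -> 0 \in cl -> 1 \in cl -> 2 \in cl ->
  (x \in map sel cl) = [|| x == sel 0, x == sel 1 | x == sel 2].
Proof.
move=> Hall H0 H1 H2; apply/mapP/idP => [[p Hp ->]|].
  have := allP Hall p Hp; case: p {Hp} => [|[|[|p]]] //= _; by rewrite eqxx ?orbT.
by case/or3P => /eqP ->; [exists 0 | exists 1 | exists 2].
Qed.

Theorem mainTheorem3 :
  forall f1 : 45.-tuple T, sat_rels Rrels f1 ->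
  exists f2 : 85.-tuple T, sat_rels Srels f2 /\ [set x in f2] = [set x in f1].
Proof.
move=> f1 Hf1.
pose g i := enc (at_ f1 i).
have Hb : forall i, g i < 25 by move=> i; exact: enc_lt.
have HR : all (fun t => g t.1.1 == opn (g t.1.2) (g t.2)) Rrels.
  apply/allP => [[[a b] c]] Hin /=; by rewrite /g (Hf1 _ _ _ Hin) enc_op.
have sub : forall l, all (fun t => t \in Rrels) l -> all (holds g) (mkrels l).
  move=> l Hl; rewrite mkrels_holds; apply/allP => t Ht; exact: (allP HR) _ (allP Hl _ Ht).
case/and3P: subrels_ok => HsA HsB HsM.
have GA := tangleA Hb (sub _ HsA).
have GB := @tangleA (fun i => g (renB i)) (fun i => Hb _) (etrans (renB_holds g) (sub _ HsB)).
case/and3P: GA => TA1 GA2 _.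
case/and3P: GB => TB1 GB2 _.
have GM := mainM Hb (introT and3P (And3 TA1 TB1 (sub _ HsM))).
case/and5P: GM => GM1 GM2 GM3 GM4 _.
have GM1' : all (eq_op (g 1)) (map g K1M) := GM1.
have GM2' : all (eq_op (g 3)) (map g K2) := GM2.
have GM3' : all (eq_op (g 7)) (map g K3) := GM3.
have GM4' : orthP [:: g 1; g 3; g 7] := GM4.
have E1 : forall i, i \in K1M -> g i = g 1.
  by move=> i Hi; apply/esym/eqP; exact: (allP GM1' _ (map_f g Hi)).
have E2 : forall i, i \in K2 -> g i = g 3.
  by move=> i Hi; apply/esym/eqP; exact: (allP GM2' _ (map_f g Hi)).
have E3 : forall i, i \in K3 -> g i = g 7.
  by move=> i Hi; apply/esym/eqP; exact: (allP GM3' _ (map_f g Hi)).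
have GA2' : (g 13 == g 14) ==> all (eq_op (g 13)) (map g varsA) := GA2.
have GB2' : (g 34 == g 35) ==> all (eq_op (g 34)) (map (fun i => g (renB i)) varsA) := GB2.
have e13 : g 13 = g 1 by apply: E1.
have e14 : g 14 = g 1 by apply: E1.
have e34 : g 34 = g 1 by apply: E1.
have e35 : g 35 = g 1 by apply: E1.
rewrite e13 e14 eqxx implyTb in GA2'.
rewrite e34 e35 eqxx implyTb in GB2'.
have EA : forall i, i \in varsA -> g i = g 1.
  by move=> i Hi; apply/esym/eqP; exact: (allP GA2' _ (map_f g Hi)).
have EB : forall i, i \in map renB varsA -> g i = g 1.
  move=> i /mapP [j Hj ->]; apply/esym/eqP.
  exact: (allP GB2' _ (map_f (fun i => g (renB i)) Hj)).
pose sel p := at_ f1 (repv p).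
have Hsel : forall i, i < 45 -> g i.+1 = g (repv (nth 0 cl1 i)).
  move=> i Hi; have := allP cl1_ok i; rewrite mem_iota add0n Hi => /(_ isT).
  case: (nth 0 cl1 i) => [|[|[|p]]] /=.
  - by case/or3P => [/E1|/EA|/EB] ->.
  - by move/E2 ->.
  - by move/E3 ->.
  - by [].
have Ef1 : tval f1 = map sel cl1.
  apply: (@eq_from_nth _ (0 : T)%R); first by rewrite size_tuple size_map size_cl1.
  move=> i Hi; rewrite size_tuple in Hi.
  rewrite (nth_map 0) ?size_cl1 //; apply: enc_inj; exact: Hsel i Hi.
have Horth : forall p q, p < 3 -> q < 3 -> qop (sel p) (sel q) = sel p.
  move=> p q Hp Hq; apply: enc_inj; rewrite enc_op.
  have Hm : forall p, p < 3 -> enc (sel p) \in [:: g 1; g 3; g 7].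
    by case=> [|[|[|]]] // _; rewrite !inE eqxx ?orbT.
  by have /allP /(_ _ (Hm q Hq)) /eqP := allP GM4' _ (Hm p Hp).
have Hs2 : size (map sel cl2) == 85 by rewrite size_map size_cl2.
exists (Tuple Hs2); split.
- move=> a b c Hin; have /and4P [Ha Hb' Hc Heq] := allP cl2_ok _ Hin.
  have Ha' : a.-1 < size cl2 by rewrite size_cl2; case: (a) Ha => //= n /andP[_ H]; exact: H.
  have Hb'' : b.-1 < size cl2 by rewrite size_cl2; case: (b) Hb' => //= n /andP[_ H]; exact: H.
  have Hc' : c.-1 < size cl2 by rewrite size_cl2; case: (c) Hc => //= n /andP[_ H]; exact: H.
  rewrite /at_; change (tval (Tuple Hs2)) with (map sel cl2).
  rewrite !(nth_map 0) // (eqP Heq) Horth //; apply: (allP cl2_b); exact: mem_nth.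
- apply/setP => x; rewrite !in_set.
  have ->: (x \in f1) = (x \in map sel cl1) by rewrite -Ef1.
  have ->: (x \in Tuple Hs2) = (x \in map sel cl2) by [].
  case/and3P: cl1_m => m10 m11 m12; case/and3P: cl2_m => m20 m21 m22.
  by rewrite !mem_sel ?cl1_b ?cl2_b.
Qed.
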